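(* Let $n\ge2$ and let $H$ be a subgraph of the complete graph $K_n$ on vertex set $\{1,\dots,n\}$. Let $H^*$ be the subgraph of the shift graph $S_n$ induced by the vertices $(a,b)$, $a<b$, such that $\{a,b\}$ is an edge of $H$. Then (1) $\chi(H^* )\ge\log_2\chi(H)$, and (2) the odd-girth of $H^*$ is strictly larger than the odd-girth of $H$.
   Context: The shift graph $S_n$ has vertex set $\{(a,b):1\le a<b\le n\}$, two vertices $(a,b)$ and $(a',b')$ adjacent if and only if $b=a'$ or $b'=a$. The odd-girth of a graph is the length of its shortest odd cycle (infinite if bipartite); the convention is that infinity is strictly larger than infinity is not needed, i.e., if $H$ is bipartite then $H^*$ is bipartite. *)

(* Defs.v *)
From Stdlib Require Import Reals.
From mathcomp Require Import all_boot.
Set Implicit Arguments. Unset Strict Implicit. Unset Printing Implicit Defensive.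

(* A simple graph on a finite vertex type T is a relation e : rel T
   (symmetry / irreflexivity are stated as hypotheses where needed). *)

Definition colorable (T : finType) (e : rel T) (k : nat) : bool :=
  [exists f : {ffun T -> 'I_k}, [forall x, [forall y, e x y ==> (f x != f y)]]].

(* Chromatic number: the least k such that e is k-colourable
   (k = #|T| always works when e is irreflexive). *)
Definition chi (T : finType) (e : rel T) : nat :=
  find (colorable e) (iota 0 #|T|.+1).

Definition has_cycle_len (T : finType) (e : rel T) (k : nat) : bool :=
  (2 < k) &&
  [exists f : {ffun 'I_k -> T},
     injectiveb f && [forall i : 'I_k, e (f i) (f (ordS i))]].

Definition has_odd_cycle_len (T : finType) (e : rel T) (k : nat) : bool :=
  odd k && has_cycle_len e k.

(* Odd girth: length of a shortest odd cycle, None (= infinity) if there is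
   none.  A cycle has at most #|T| vertices, so searching k <= #|T| suffices. *)
Definition odd_girth (T : finType) (e : rel T) : option nat :=
  let k := find (has_odd_cycle_len e) (iota 0 #|T|.+1) in
  if k <= #|T| then Some k else None.

(* Strict order on nat extended with infinity (None), with the paper's
   convention: if the second argument is infinite, "first > second" means
   the first is infinite too. *)
Definition og_gt (a b : option nat) : Prop :=
  match a, b with
  | None, _ => True
  | Some _, None => False
  | Some x, Some y => y < x
  end.

Definition star_vertex (n : nat) (H : rel 'I_n) :=
  {p : 'I_n * 'I_n | (p.1 < p.2) && H p.1 p.2}.

Definition star_adj (n : nat) (H : rel 'I_n) : rel (star_vertex H) :=
  fun u v => ((sval u).2 == (sval v).1) || ((sval v).2 == (sval u).1).

Definition log2R (x : Rdefinitions.R) : Rdefinitions.R := Rdiv (ln x) (ln 2).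
Arguments star_adj {n} H.

(* Main.v *)
Require Import Defs.
From Stdlib Require Import Reals Lra.
From mathcomp Require Import all_boot zify.


Section Walk.
Variables (T : finType) (e : rel T).
Hypotheses (esym : symmetric e) (eirr : irreflexive e).

Definition ecount (w : nat -> T) (a b : nat) : nat :=
  \sum_(a <= m < b) (w m != w m.+1).

Lemma odd_walk N : forall L (w : nat -> T), L <= N ->
  (forall m, m < L -> e (w m) (w m.+1) || (w m == w m.+1)) ->
  w L = w 0 -> odd (ecount w 0 L) ->
  exists l, l <= ecount w 0 L /\ has_odd_cycle_len e l.
Proof.
elim: N => [|N IH] L w HLN Hst HL Ho.
  move: HLN; rewrite leqn0 => /eqP HL0; move: Ho; by rewrite HL0 /ecount big_geq.
case: (boolP [exists i : 'I_L, exists j : 'I_L, (i < j) && (w i == w j)]).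
- case/existsP=> i /existsP [j /andP [Hij /eqP Hwij]].
  have HjL : j < L := ltn_ord j.
  set u := fun t => w (i + t).
  set o := fun t => if t <= i then w t else w (t + (j - i)).
  have Hs : ecount w 0 L = ecount u 0 (j - i) + ecount o 0 (L - (j - i)).
    rewrite /ecount (@big_cat_nat _ _ _ i) //; last by lia.
    rewrite (@big_cat_nat _ _ _ j i) /=; [|lia|lia].
    have -> : \sum_(0 <= m < j - i) (u m != u m.+1) = \sum_(i <= m < j) (w m != w m.+1).
      rewrite -{2}(add0n i) big_addn; apply: eq_bigr => m _; by rewrite /u addnS [i + m]addnC.
    have HL2 : i < L - (j - i).
      by apply/ltP; move/ltP: Hij; move/ltP: HjL; lia.
    rewrite (@big_cat_nat _ _ _ i 0 (L - (j - i))) /=; [|lia|lia].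
    rewrite (big_ltn HL2) (big_ltn HjL).
    have -> : \sum_(0 <= m < i) (o m != o m.+1) = \sum_(0 <= m < i) (w m != w m.+1).
      apply: eq_big_nat => m /andP [_ Hm]; rewrite /o Hm.
      by rewrite (ltnW Hm).
    have -> : (o i != o i.+1) = (w j != w j.+1).
      rewrite /o leqnn ltnn -Hwij.
      have -> : i.+1 + (j - i) = j.+1 by lia.
      by [].
    have -> : \sum_(i.+1 <= m < L - (j - i)) (o m != o m.+1) = \sum_(j.+1 <= m < L) (w m != w m.+1).
      have -> : j.+1 = i.+1 + (j - i) by lia.
      rewrite big_addn; apply: eq_big_nat => m /andP [Hm _].
      rewrite /o leqNgt Hm /= leqNgt ltnW //.
    by rewrite addnCA.
  move: Ho; rewrite Hs oddD.
  case Hou: (odd (ecount u 0 (j - i))) => /= Hoo.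
  + have [l [Hl Hc]] : exists l, l <= ecount u 0 (j - i) /\ has_odd_cycle_len e l.
      apply: (IH (j - i) u) => //.
      * by apply/leP; move/ltP: Hij; move/leP: HLN; move/ltP: HjL; lia.
      * move=> m Hm; rewrite /u addnS; apply: Hst.
        by apply/ltP; move/ltP: Hm; move/ltP: Hij; move/ltP: HjL; lia.
      * by rewrite /u addn0 subnKC ?Hwij // ltnW.
    exists l; split => //; exact: leq_trans Hl (leq_addr _ _).
  + have [l [Hl Hc]] : exists l, l <= ecount o 0 (L - (j - i)) /\ has_odd_cycle_len e l.
      apply: (IH (L - (j - i)) o) => //.
      * by apply/leP; move/ltP: Hij; move/leP: HLN; move/ltP: HjL; lia.
      * move=> m Hm; rewrite /o.
        case: (ltngtP m i) => Hmi.
        - apply: Hst; lia.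
        - rewrite addSn; apply: Hst; lia.
        - subst m; rewrite Hwij.
          have -> : i.+1 + (j - i) = j.+1 by lia.
          exact: Hst.
      * rewrite /o leq0n leqNgt.
        have HL2 : i < L - (j - i) by apply/ltP; move/ltP: Hij; move/ltP: HjL; lia.
        rewrite HL2 /= subnK ?HL //.
        by apply/leP; move/ltP: Hij; move/ltP: HjL; lia.
    exists l; split => //; exact: leq_trans Hl (leq_addl _ _).
- rewrite negb_exists => /forallP Hno.
  have Hinj : forall a b, a < L -> b < L -> w a = w b -> a = b.
    move=> a b Ha Hb Hab.
    case: (ltngtP a b) => // Hlt.
    + have := Hno (Ordinal Ha); rewrite negb_exists => /forallP /(_ (Ordinal Hb)).
      by rewrite /= Hlt Hab eqxx.
    + have := Hno (Ordinal Hb); rewrite negb_exists => /forallP /(_ (Ordinal Ha)).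
      by rewrite /= Hlt Hab eqxx.
  have HL1 : L != 1.
    apply/eqP => HL1; move: Ho; subst L; by rewrite /ecount big_nat1 HL eqxx.
  have Hdiff : forall m, m < L -> w m != w m.+1.
    move=> m Hm; apply/eqP => Heq.
    case: (ltngtP m.+1 L) => HmL.
    + by have := Hinj _ _ Hm HmL Heq => /eqP; rewrite eqn_leq ltnn andbF.
    + by move: HmL; rewrite ltnNge Hm.
    + rewrite HmL HL in Heq.
      have L0 : 0 < L by exact: leq_ltn_trans (leq0n m) Hm.
      have := Hinj _ _ Hm L0 Heq => Hm0; subst m.
      by move: HL1; rewrite -HmL.
  have HcL : ecount w 0 L = L.
    rewrite /ecount (eq_big_nat _ _ (F2 := fun _ => 1)); last by move=> m /andP [_ Hm]; rewrite Hdiff.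
    by rewrite sum_nat_const_nat subn0 muln1.
  exists L; split; first by rewrite HcL.
  rewrite /has_odd_cycle_len /has_cycle_len.
  have OL : odd L by rewrite -HcL.
  have L2 : 2 < L.
    have aux : forall x, odd x -> x != 1 -> 2 < x by move=> [|[|[|x]]].
    exact: aux.
  rewrite OL L2 /=.
  apply/existsP; exists [ffun i : 'I_L => w i]; apply/andP; split.
  + apply/injectiveP => a b; rewrite !ffunE => Hab; apply: val_inj; exact: Hinj (ltn_ord a) (ltn_ord b) Hab.
  + apply/forallP => i; rewrite !ffunE.
    have L0 : 0 < L by exact: ltn_trans L2.
    have Hi := ltn_ord i.
    have := Hst _ Hi; rewrite (negbTE (Hdiff _ Hi)) orbF.
    case: (ltngtP i.+1 L) => HiL.
    + by rewrite /= modn_small.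
    + by move: HiL; rewrite ltnNge Hi.
    + by rewrite /= HiL modnn HL.
Qed.
End Walk.

Lemma cycle_le_card (T : finType) (e : rel T) l : has_cycle_len e l -> l <= #|T|.
Proof.
case/andP=> _ /existsP [f /andP [/injectiveP Hi _]].
by have := @leq_card _ _ _ Hi; rewrite card_ord.
Qed.

Lemma odd_girth_le (T : finType) (e : rel T) l : has_odd_cycle_len e l ->
  exists y, odd_girth e = Some y /\ y <= l.
Proof.
move=> Hl.
have Hlc : l <= #|T| by apply: (@cycle_le_card _ e); case/andP: Hl.
have Hf : find (has_odd_cycle_len e) (iota 0 #|T|.+1) <= l.
  rewrite leqNgt; apply/negP => Hlt.
  have := before_find 0 Hlt; rewrite nth_iota ?add0n ?Hl //.
exists (find (has_odd_cycle_len e) (iota 0 #|T|.+1)); split => //.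
by rewrite /odd_girth (leq_trans Hf Hlc).
Qed.

Lemma odd_girth_some (T : finType) (e : rel T) k : odd_girth e = Some k ->
  has_odd_cycle_len e k.
Proof.
rewrite /odd_girth; set k0 := find _ _.
case: ifP => // Hk [<-].
have Hh : has (has_odd_cycle_len e) (iota 0 #|T|.+1) by rewrite has_find size_iota.
by have := nth_find 0 Hh; rewrite nth_iota ?add0n.
Qed.

Lemma chi_le (T : finType) (e : rel T) k : colorable e k -> chi e <= k.
Proof.
move=> Hk; rewrite /chi.
case: (leqP k #|T|) => Hk'.
  rewrite leqNgt; apply/negP => Hlt.
  by have := before_find 0 Hlt; rewrite nth_iota ?add0n ?Hk.
by apply: leq_trans (find_size _ _) _; rewrite size_iota.
Qed.

Lemma colorable_card (T : finType) (e : rel T) : irreflexive e -> colorable e #|T|.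
Proof.
move=> Hirr; apply/existsP; exists [ffun x => enum_rank x].
apply/forallP => x; apply/forallP => y; apply/implyP => Hxy; rewrite !ffunE.
apply/negP => /eqP /enum_rank_inj Hxy'; subst y; by rewrite Hirr in Hxy.
Qed.

Lemma chi_col (T : finType) (e : rel T) : irreflexive e -> colorable e (chi e).
Proof.
move=> Hirr.
have Hh : has (colorable e) (iota 0 #|T|.+1).
  by apply/hasP; exists #|T|; [rewrite mem_iota add0n leqnn | exact: colorable_card].
have Hlt := Hh; rewrite has_find size_iota in Hlt.
by have := nth_find 0 Hh; rewrite nth_iota ?add0n.
Qed.

Lemma chi_map (T U : finType) (e : rel T) (h : T -> U) :
  (forall x y, e x y -> h x != h y) -> chi e <= #|U|.
Proof.
move=> Hh; apply: chi_le; apply/existsP; exists [ffun x => enum_rank (h x)].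
apply/forallP => x; apply/forallP => y; apply/implyP => Hxy; rewrite !ffunE.
apply/negP => /eqP /enum_rank_inj Hxy'; by have := Hh _ _ Hxy; rewrite Hxy' eqxx.
Qed.

Lemma chi_pos (T : finType) (e : rel T) (x : T) : irreflexive e -> 0 < chi e.
Proof.
move=> Hirr; have := @chi_col _ _ Hirr; rewrite lt0n; apply: contraTneq => ->.
apply/negP => /existsP [f _]; by case: (f x).
Qed.

Lemma star_irr n (H : rel 'I_n) : irreflexive (star_adj H).
Proof.
move=> [[a b] Hp]; rewrite /star_adj /= orbb.
move/andP: Hp => [Hab _].
by apply/negP => /eqP Hba; move: Hab; rewrite Hba ltnn.
Qed.

Lemma part1_nat n (H : rel 'I_n) (Hsym : symmetric H) (Hirr : irreflexive H) :
  chi H <= 2 ^ chi (star_adj H).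
Proof.
set c := chi (star_adj H).
have /existsP [g /forallP Hg] := @chi_col _ _ (@star_irr _ H).
pose S (x : 'I_n) : {set 'I_c} := [set g v | v in [pred v : star_vertex H | (sval v).2 == x]].
have key : forall x y : 'I_n, x < y -> H x y -> S x != S y.
  move=> x y Hxy Hxy'.
  have Hv : (x < y) && H x y by rewrite Hxy Hxy'.
  pose v0 : star_vertex H := exist _ (x, y) Hv.
  apply/negP => /eqP Hs.
  have : g v0 \in S y by rewrite /S; apply/imsetP; exists v0; rewrite ?inE /=.
  rewrite -Hs => /imsetP [v Hv2 Hgv].
  move: Hv2; rewrite inE /= => Hv2.
  have := Hg v => /forallP /(_ v0) /implyP; rewrite /star_adj Hv2 /= => /(_ isT).
  by rewrite Hgv eqxx.
have := @chi_map _ _ H S.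
have Hcard : #|{set 'I_c}| = 2 ^ c.
  rewrite -cardsT (_ : [set: {set 'I_c}] = powerset [set: 'I_c]).
    by rewrite card_powerset cardsT card_ord.
  by apply/setP => A; rewrite powersetE subsetT inE.
rewrite Hcard; apply => x y Hxy.
case: (ltngtP x y) => Hlt.
- exact: key.
- rewrite eq_sym; apply: key => //; by rewrite Hsym.
- by have /val_inj Hxy' := Hlt; subst y; rewrite Hirr in Hxy.
Qed.

Lemma log_part (m c : nat) : 0 < m -> m <= 2 ^ c -> Rle (log2R (INR m)) (INR c).
Proof.
move=> Hm Hmc.
have H2 : Rlt 0 (ln 2) by rewrite -ln_1; apply: ln_increasing; lra.
have Hpow : INR (2 ^ c) = pow 2 c.
  elim: c {Hmc} => [|c IH] //=; rewrite expnS -IH mulnE mult_INR //.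
have Hm0 : Rlt 0 (INR m) by apply: lt_0_INR; apply/ltP.
have Hle : Rle (ln (INR m)) (Rmult (INR c) (ln 2)).
  rewrite -ln_pow; last lra.
  rewrite -Hpow.
  have /le_INR : (m <= 2 ^ c)%coq_nat by apply/leP.
  case/Rle_lt_or_eq_dec => Hlt.
  - by apply: Rlt_le; apply: ln_increasing.
  - by rewrite Hlt; apply: Rle_refl.
rewrite /log2R; apply: (Rmult_le_reg_r (ln 2)) => //.
have -> : Rmult (Rdiv (ln (INR m)) (ln 2)) (ln 2) = ln (INR m) by field; lra.
exact: Hle.
Qed.

Lemma sum_par (d : nat -> bool) L :
  odd (\sum_(0 <= m < L) (d m != d m.+1)) = (d 0 != d L).
Proof.
elim: L => [|L IH]; first by rewrite big_geq // eqxx.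
rewrite big_nat_recr //= oddD IH.
by case: (d 0); case: (d L); case: (d L.+1).
Qed.

Lemma star_to_H n (H : rel 'I_n) (Hsym : symmetric H) (Hirr : irreflexive H) k :
  has_odd_cycle_len (star_adj H) k ->
  exists l, l < k /\ has_odd_cycle_len H l.
Proof.
case/andP=> Hk /andP [Hk2 /existsP [f /andP [_ /forallP Hf]]].
have k0 : 0 < k by lia.
pose idx (m : nat) : 'I_k := Ordinal (ltn_pmod m k0).
pose v m := f (idx m).
pose A m := (sval (v m)).1.
pose B m := (sval (v m)).2.
have HAB : forall m, A m < B m /\ H (A m) (B m).
  by move=> m; rewrite /A /B; case: (v m) => p /= /andP.
have Hadj : forall m, (B m == A m.+1) || (B m.+1 == A m).
  move=> m; have := Hf (idx m); rewrite /star_adj.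
  have -> : ordS (idx m) = idx m.+1.
    apply: val_inj => /=; by rewrite -addn1 modnDml addn1.
  by [].
have Hper : forall m, v (m + k) = v m.
  move=> m; rewrite /v.
  have -> : idx (m + k) = idx m by apply: val_inj => /=; rewrite modnDr.
  by [].
pose d m := B m == A m.+1.
pose w m := if d m then B m else A m.
have Hstep : forall m, (H (w m) (w m.+1) && (w m != w m.+1) && (d m == d m.+1)) || ((w m == w m.+1) && (d m != d m.+1)).
  move=> m; rewrite /w /d.
  have [h1 h2] := HAB m.+1.
  case: eqP => E1; case: eqP => E2 /=.
  - rewrite E1 h2 /= ?eqxx ?andbT ?andbF ?orbF; apply/eqP => E; move: h1; by rewrite E ltnn.
  - by rewrite E1 eqxx orbT.
  - have := Hadj m; move/eqP/negbTE: E1 => ->; rewrite orFb => /eqP <-.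
    by rewrite eqxx orbT.
  - have := Hadj m; move/eqP/negbTE: E1 => ->; rewrite orFb => /eqP <-.
    rewrite Hsym h2 /= ?eqxx ?andbT ?andbF ?orbF; apply/eqP => E; move: h1; by rewrite E ltnn.
have Hcnt : forall m, (w m != w m.+1) = (d m == d m.+1).
  move=> m; have := Hstep m.
  case E: (w m == w m.+1); case D: (d m == d m.+1) => //=; by rewrite ?andbF.
have HwP : forall m, w (m + k) = w m.
  by move=> m; rewrite /w /d /A /B -addSn !Hper.
have Hwk : w k = w 0 by rewrite -(HwP 0) add0n.
have Hdk : d k = d 0 by rewrite /d /A /B -(add0n k) -addSn !Hper.
set E := @ecount _ w 0 k.
set C := \sum_(0 <= m < k) (d m != d m.+1).
have HEC : E + C = k.
  rewrite /E /ecount /C -big_split /=.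
  rewrite (eq_big_nat _ _ (F2 := fun _ => 1)); first by rewrite sum_nat_const_nat subn0 muln1.
  by move=> m _; rewrite Hcnt; case: (d m == d m.+1).
have HC : ~~ odd C by rewrite /C sum_par Hdk eqxx.
have HE : odd E by move: Hk HC; rewrite -HEC oddD; case: (odd E); case: (odd C).
have HC1 : 0 < C.
  case: (boolP [exists m : 'I_k, d m != d m.+1]).
  - case/existsP=> m Hm.
    rewrite /C (@big_cat_nat _ _ _ m) //=; last by apply: ltnW.
    by rewrite (big_ltn (ltn_ord m)) Hm /=; lia.
  - rewrite negb_exists => /forallP Hall.
    have Hd : forall m, m <= k -> d m = d 0.
      elim=> [|m IH] // Hm.
      have := Hall (Ordinal Hm); rewrite negbK /= => /eqP <-; apply: IH; exact: ltnW.
    exfalso.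
    case Hd0 : (d 0).
    + have : forall m, m <= k -> A 0 + m <= A m.
        elim=> [|m IH] Hm; first by rewrite addn0.
        have := Hd m (ltnW Hm); rewrite Hd0 /d => /eqP <-.
        have [h1 _] := HAB m; have := IH (ltnW Hm); lia.
      move=> /(_ k (leqnn k)); rewrite /A -(add0n k) Hper; lia.
    + have : forall m, m <= k -> B m + m <= B 0.
        elim=> [|m IH] Hm; first by rewrite addn0.
        have := Hd m (ltnW Hm); rewrite Hd0 /d => /negbT Hn.
        have := Hadj m; rewrite (negbTE Hn) /= => /eqP E'.
        have E'' : nat_of_ord (B m.+1) = nat_of_ord (A m) by rewrite E'.
        have [h1 _] := HAB m; have := IH (ltnW Hm); lia.
      move=> /(_ k (leqnn k)); rewrite /B -(add0n k) Hper; lia.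
have [l [Hl Hc]] : exists l, l <= E /\ has_odd_cycle_len H l.
  apply: (@odd_walk _ H k k w) => //.
  move=> m _; have := Hstep m; case/orP => [/andP [/andP [-> _] _] // | /andP [-> _]]; by rewrite orbT.
exists l; split => //; lia.
Qed.

Theorem mainTheorem13 (n : nat) (H : rel 'I_n)
  (Hn : 2 <= n) (Hsym : symmetric H) (Hirr : irreflexive H) :
  Rle (log2R (INR (chi H))) (INR (chi (star_adj H)))
  /\ og_gt (odd_girth (star_adj H)) (odd_girth H).
Proof.
split.
- apply: log_part; last exact: part1_nat.
  have x : 'I_n := Ordinal (leq_trans (isT : 0 < 2) Hn).
  exact: (@chi_pos _ H x Hirr).
- case E: (odd_girth (star_adj H)) => [k|] //=.
  have [l [Hlk Hl]] := @star_to_H n H Hsym Hirr k (@odd_girth_some _ _ _ E).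
  have [y [-> Hy]] := @odd_girth_le _ _ _ Hl.
  by apply: leq_ltn_trans Hy Hlk.
Qed.
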